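(* Let $G=(V,E)$ be an undirected graph with layers $L_0, L_1, L_2, L_{\geq 2}$ and quantities $d^+, d^-, rs$ as in the context, and let $0<\varepsilon<1$. Let $\bar\ell_{\geq 2}$ be the output of the procedure Estimate-Periphery-Size (see context) run with $$s_1 = \Theta\!\left(\frac{d^+_{\max}(L_1)}{\varepsilon^2\, d^+_{avg}(L_1)}\right), \qquad s_{\geq 2} = \Theta\!\left(\frac{c_{rs}\cdot d^-_{\max}(L_{\geq 2})}{\varepsilon^2\, d^-_{avg}(L_{\geq 2})}\right).$$ Then with high constant probability, $\bar\ell_{\geq 2} \in [(1-\varepsilon)|L_{\geq 2}|, (1+\varepsilon)|L_{\geq 2}|]$.
   Context: Given $L_0 \subseteq V$, let $L_1 = \bigcup_{v\in L_0}N(v)\setminus L_0$, $L_2$ the set of nodes at distance exactly $2$ from $L_0$, and $L_{\geq 2} = V\setminus(L_0\cup L_1)$. For $v\in L_1$, $d^+(v)$ is its number of neighbors in $L_2$; for $v\in L_2$, $d^-(v)$ is its number of neighbors in $L_1$; for $v\in L_{\geq 2}\setminus L_2$, $d^-(v)=0$. For a set $R$: $d^+_{avg}(R) = \frac{1}{|R|}\sum_{v\in R}d^+(v)$, $d^+_{\max}(R)=\max_{v\in R}d^+(v)$, and analogously $d^-_{avg}(R)$, $d^-_{\max}(R)$. Each $v\in L_{\geq 2}$ has a reachability score $rs(v)>0$, and the procedure Reach returns a node of $L_{\geq 2}$ (together with its score) such that each $v\in L_{\geq 2}$ is returned with probability $rs(v)/\sum_{u\in L_{\geq 2}}rs(u)$,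 independently across calls. Let $rs_{avg}(L_{\geq 2}) = \frac{1}{|L_{\geq 2}|}\sum_{v\in L_{\geq 2}}rs(v)$, $rs_{\min}(L_{\geq 2}) = \min_{v\in L_{\geq 2}}rs(v)$, and $c_{rs} = rs_{avg}(L_{\geq 2})/rs_{\min}(L_{\geq 2})$. Estimate-Periphery-Size: draw $s_1$ uniform independent nodes $S_1$ from $L_1$ and set $\bar d^+ = \frac{1}{s_1}\sum_{v\in S_1}d^+(v)$; draw $s_{\geq 2}$ nodes $S_2$ by independent calls to Reach and set $\bar d^- = \left(\sum_{v\in S_2}\frac{d^-(v)}{rs(v)}\right)\big/\left(\sum_{v\in S_2}\frac{1}{rs(v)}\right)$; output $\bar\ell_{\geq 2} = |L_1|\cdot \bar d^+/\bar d^-$. ''With high constant probability'' means with probability at least a fixed constant close to $1$ (determined by the hidden constants in $\Theta$). *)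

(* Defs.v *)
From HB Require Import structures.
From mathcomp Require Import all_boot all_order all_algebra.
From mathcomp Require Import reals.
Set Implicit Arguments. Unset Strict Implicit. Unset Printing Implicit Defensive.
Import Order.TTheory GRing.Theory Num.Theory.
Local Open Scope ring_scope.

Section Layers.
Variables (V : finType) (e : rel V) (L0 : {set V}).

Definition L1 : {set V} := [set u | (u \notin L0) && [exists v in L0, e v u]].
Definition Lge2 : {set V} := ~: (L0 :|: L1).
(* L_2 = nodes at distance exactly 2 from L_0 = nodes of L_{>=2} adjacent to L_1 *)
Definition L2 : {set V} := [set v in Lge2 | [exists u in L1, e u v]].

Definition dplus (v : V) : nat := #|[set u in L2 | e v u]|.
Definition dminus (v : V) : nat :=
  if v \in L2 then #|[set u in L1 | e u v]| else 0%N.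
End Layers.

Section Stats.
Variables (R : realType) (V : finType).

Definition avg_nat (f : V -> nat) (A : {set V}) : R :=
  (\sum_(v in A) f v)%:R / #|A|%:R.
Definition max_nat (f : V -> nat) (A : {set V}) : nat := \max_(v in A) f v.

Definition rs_avg (rs : V -> R) (A : {set V}) : R :=
  (\sum_(v in A) rs v) / #|A|%:R.
(* minimum of rs over A; the seed rs_avg is >= every value's minimum, so for
   nonempty A this is exactly min_{v in A} rs v *)
Definition rs_min (rs : V -> R) (A : {set V}) : R :=
  \big[Num.min/rs_avg rs A]_(v in A) rs v.
Definition c_rs (rs : V -> R) (A : {set V}) : R := rs_avg rs A / rs_min rs A.
End Stats.

Section Estimator.
Variables (R : realType) (V : finType) (e : rel V) (L0 : {set V}) (rs : V -> R).

Definition p_unif (v : V) : R :=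
  if v \in L1 e L0 then 1 / #|L1 e L0|%:R else 0.
Definition p_reach (v : V) : R :=
  if v \in Lge2 e L0 then rs v / (\sum_(w in Lge2 e L0) rs w) else 0.

Definition estimate (s1 s2 : nat) (S1 : {ffun 'I_s1 -> V}) (S2 : {ffun 'I_s2 -> V}) : R :=
  let dbar_plus := (\sum_(i < s1) (dplus e L0 (S1 i))%:R) / s1%:R in
  let dbar_minus := (\sum_(j < s2) (dminus e L0 (S2 j))%:R / rs (S2 j))
                    / (\sum_(j < s2) 1 / rs (S2 j)) in
  #|L1 e L0|%:R * dbar_plus / dbar_minus.

(* probability (over s1 iid uniform draws from L_1 and s2 iid independent
   Reach draws) that the estimate lies in [(1-eps)|L_{>=2}|, (1+eps)|L_{>=2}|] *)
Definition success_prob (eps : R) (s1 s2 : nat) : R :=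
  \sum_(S1 : {ffun 'I_s1 -> V}) \sum_(S2 : {ffun 'I_s2 -> V})
    ((\prod_(i < s1) p_unif (S1 i)) * (\prod_(j < s2) p_reach (S2 j)) *
     (if ((1 - eps) * #|Lge2 e L0|%:R <= @estimate s1 s2 S1 S2)
         && (@estimate s1 s2 S1 S2 <= (1 + eps) * #|Lge2 e L0|%:R)
      then 1 else 0)).
End Estimator.

(* Main.v *)
Require Import Defs.
From HB Require Import structures.
From mathcomp Require Import all_boot all_order all_algebra.
From mathcomp Require Import reals.
From mathcomp Require Import ring lra.
Import Order.TTheory GRing.Theory Num.Theory.
Local Open Scope ring_scope.

Section Prob.
Variables (R : realType) (V : finType) (p : V -> R).
Hypothesis p1 : \sum_v p v = 1.

Lemma prod_exp n (F : 'I_n -> V -> R) :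
  \sum_(S : {ffun 'I_n -> V}) \prod_i F i (S i) = \prod_i \sum_v F i v.
Proof. by rewrite bigA_distr_bigA. Qed.

Lemma prod_if1 n (i : 'I_n) (A : 'I_n -> R) :
  \prod_k (if k == i then A k else 1) = A i.
Proof. by rewrite -big_mkcond big_pred1_eq. Qed.

Lemma mass n : \sum_(S : {ffun 'I_n -> V}) \prod_i p (S i) = 1.
Proof.
rewrite (prod_exp _ (fun _ => p)).
by rewrite (eq_bigr (fun _ => 1)) ?prodr_const ?expr1n // => k _; rewrite p1.
Qed.

Lemma exp1 n (i : 'I_n) (u : V -> R) :
  \sum_(S : {ffun 'I_n -> V}) (\prod_k p (S k)) * u (S i) = \sum_v p v * u v.
Proof.
transitivity (\sum_(S : {ffun 'I_n -> V})
   \prod_k (p (S k) * (if k == i then u (S k) else 1))).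
  apply: eq_bigr => S _; rewrite big_split /=; congr (_ * _).
  by rewrite (prod_if1 _ i (fun k => u (S k))).
rewrite (prod_exp _ (fun k v => p v * (if k == i then u v else 1))).
rewrite (eq_bigr (fun k => if k == i then \sum_v p v * u v else 1)).
  by rewrite (prod_if1 _ i (fun _ => \sum_v p v * u v)).
move=> k _; case: eqP => _ //.
by under eq_bigr do rewrite mulr1.
Qed.

Lemma exp2 n (i j : 'I_n) (u w : V -> R) : i != j ->
  \sum_(S : {ffun 'I_n -> V}) (\prod_k p (S k)) * (u (S i) * w (S j)) =
  (\sum_v p v * u v) * (\sum_v p v * w v).
Proof.
move=> ij.
transitivity (\sum_(S : {ffun 'I_n -> V})
   \prod_k (p (S k) * ((if k == i then u (S k) else 1) *
                       (if k == j then w (S k) else 1)))).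
  apply: eq_bigr => S _; rewrite big_split /=; congr (_ * _).
  rewrite big_split /=.
  by rewrite (prod_if1 _ i (fun k => u (S k))) (prod_if1 _ j (fun k => w (S k))).
rewrite (prod_exp _ (fun k v => p v * ((if k == i then u v else 1) *
                       (if k == j then w v else 1)))).
rewrite (eq_bigr (fun k => (if k == i then \sum_v p v * u v else 1) *
             (if k == j then \sum_v p v * w v else 1))).
  rewrite big_split /=.
  by rewrite (prod_if1 _ i (fun _ => \sum_v p v * u v))
             (prod_if1 _ j (fun _ => \sum_v p v * w v)).
move=> k _; case: (eqVneq k i) => [->|ki].
  rewrite (negbTE ij) mulr1; apply: eq_bigr => v _; by rewrite mulr1.
case: (eqVneq k j) => _; rewrite mul1r.
  by apply: eq_bigr => v _; rewrite mul1r.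
by under eq_bigr do rewrite mulr1.
Qed.

Definition mu (f : V -> R) := \sum_v p v * f v.

Lemma moment2 n (f : V -> R) :
  \sum_(S : {ffun 'I_n -> V}) (\prod_k p (S k)) *
     (\sum_i (f (S i) - mu f)) ^+ 2 =
  n%:R * \sum_v p v * (f v - mu f) ^+ 2.
Proof.
set g := fun v => f v - mu f.
have g0 : \sum_v p v * g v = 0.
  rewrite /g (eq_bigr (fun v => p v * f v - p v * mu f)); last first.
    by move=> v _; rewrite mulrBr.
  by rewrite sumrB -mulr_suml p1 mul1r subrr.
transitivity (\sum_(S : {ffun 'I_n -> V}) \sum_(i < n) \sum_(j < n)
   (\prod_k p (S k)) * (g (S i) * g (S j))).
  apply: eq_bigr => S _.
  rewrite expr2 mulr_suml mulr_sumr; apply: eq_bigr => i _.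
  rewrite mulr_sumr mulr_sumr; apply: eq_bigr => j _.
  by rewrite /g.
rewrite exchange_big; under eq_bigr do rewrite exchange_big.
rewrite /=.
transitivity (\sum_(i < n) \sum_(j < n) (if i == j then \sum_v p v * g v ^+ 2 else 0)).
  apply: eq_bigr => i _; apply: eq_bigr => j _.
  case: eqVneq => [<-|ij].
    rewrite -(exp1 _ i (fun v => g v ^+ 2)).
    by apply: eq_bigr => S _; rewrite expr2.
  by rewrite exp2 // g0 mulr0.
rewrite (eq_bigr (fun _ => \sum_v p v * g v ^+ 2)).
  by rewrite sumr_const card_ord mulr_natl.
move=> i _; rewrite -big_mkcond /=.
by rewrite (eq_bigl (fun j => j == i)) ?big_pred1_eq // => j; rewrite eq_sym.
Qed.

Hypothesis p0 : forall v, 0 <= p v.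

Lemma P_ge0 n (S : {ffun 'I_n -> V}) : 0 <= \prod_k p (S k).
Proof. by apply: prodr_ge0 => k _; apply: p0. Qed.

Lemma cheb n (f : V -> R) (t : R) : 0 < t ->
  \sum_(S : {ffun 'I_n -> V}) (\prod_k p (S k)) *
     (if t < `|\sum_i f (S i) - n%:R * mu f| then 1 else 0)
  <= n%:R * (\sum_v p v * f v ^+ 2) / t ^+ 2.
Proof.
move=> t0.
have t20 : 0 < t ^+ 2 by rewrite exprn_gt0.
apply: (@le_trans _ _ (\sum_(S : {ffun 'I_n -> V}) (\prod_k p (S k)) *
     (\sum_i (f (S i) - mu f)) ^+ 2 / t ^+ 2)).
  apply: ler_sum => S _; rewrite -mulrA; apply: ler_wpM2l; first exact: P_ge0.
  set X := \sum_i (f (S i) - mu f).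
  have -> : \sum_i f (S i) - n%:R * mu f = X.
    by rewrite /X sumrB sumr_const card_ord mulr_natl.
  case: ifP => [lt|_]; last by rewrite divr_ge0 ?sqr_ge0 // ltW.
  rewrite ler_pdivlMr // mul1r -[X ^+ 2](real_normK (num_real X)).
  nra.
rewrite -(mulr_suml _ _ _ (t ^+ 2)^-1).
rewrite moment2; apply: ler_wpM2r; first by rewrite invr_ge0 ltW.
apply: ler_wpM2l; first by rewrite ler0n.
have -> : \sum_v p v * (f v - mu f) ^+ 2 =
   \sum_v p v * f v ^+ 2 - mu f ^+ 2.
  rewrite (eq_bigr (fun v => p v * f v ^+ 2 - (2 * mu f) * (p v * f v)
                              + mu f ^+ 2 * p v)); last first.
    by move=> v _; rewrite /=; ring.
  rewrite big_split sumrB /= -!mulr_sumr p1 -/(mu f); ring.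
by rewrite lerBlDr lerDl sqr_ge0.
Qed.
End Prob.

Lemma card_sep (V : finType) (A : {set V}) (P : pred V) :
  #|[set w in A | P w]| = (\sum_(w in A) (P w : nat))%N.
Proof.
rewrite -sum1_card big_mkcond /= [RHS]big_mkcond /=.
by apply: eq_bigr => w _; rewrite inE; case: (w \in A); case: (P w).
Qed.

Lemma double_count (V : finType) (e : rel V) (L0 : {set V}) :
  (\sum_(u in L1 e L0) dplus e L0 u = \sum_(w in Lge2 e L0) dminus e L0 w)%N.
Proof.
have -> : (\sum_(w in Lge2 e L0) dminus e L0 w =
           \sum_(w in L2 e L0) #|[set u in L1 e L0 | e u w]|)%N.
  rewrite big_mkcond [RHS]big_mkcond /=; apply: eq_bigr => w _.
  rewrite /dminus; case hL2: (w \in L2 e L0); last by case: ifP.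
  by move: hL2; rewrite /L2 inE => /andP[->].
rewrite /dplus.
under eq_bigr do rewrite card_sep.
under [RHS]eq_bigr do rewrite card_sep.
by rewrite exchange_big.
Qed.

Lemma sum_if (R : realType) (V : finType) (A : {set V}) (c h : V -> R) :
  \sum_v (if v \in A then c v else 0) * h v = \sum_(v in A) c v * h v.
Proof.
rewrite [RHS]big_mkcond /=; apply: eq_bigr => v _.
by case: ifP => _ //; rewrite mul0r.
Qed.

Lemma key_ratio (R : realType) (a x y z M : R) :
  0 < a -> 5 * a < 1 -> 0 <= M ->
  `|x - 1| <= a -> `|y - 1| <= a -> `|z - 1| <= a ->
  (1 - 5 * a) * M <= M * (x * z / y) <= (1 + 5 * a) * M.
Proof.
move=> a0 a5 M0 hx hy hz.
move: hx hy hz; rewrite !ler_norml => /andP[hx1 hx2] /andP[hy1 hy2] /andP[hz1 hz2].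
have y0 : 0 < y by lra.
have h1 : 1 - 5 * a <= x * z / y.
  rewrite ler_pdivlMr //. nra.
have h2 : x * z / y <= 1 + 5 * a.
  rewrite ler_pdivrMr //. nra.
rewrite (mulrC M); apply/andP; split; exact: ler_wpM2r.
Qed.

Lemma bound_gen (R : realType) (dl eps n E mu X Y : R) :
  0 < dl -> 0 < eps -> 0 < mu -> 0 < n -> 0 <= X / Y ->
  E <= X / Y * mu ^+ 2 -> 75 / dl * (X / (eps ^+ 2 * Y)) <= n ->
  n * E / (eps / 5 * n * mu) ^+ 2 <= dl / 3.
Proof.
move=> d0 e0 m0 n0 K0 hE hn.
set K := X / Y in K0 hE.
have hK : X / (eps ^+ 2 * Y) = K / eps ^+ 2.
  by rewrite /K invfM; ring.
rewrite hK in hn.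
have h75 : 75 * K <= dl * eps ^+ 2 * n.
  have e20 : 0 < eps ^+ 2 by rewrite exprn_gt0.
  have := ler_wpM2l (ltW (mulr_gt0 d0 e20)) hn.
  have -> : dl * eps ^+ 2 * (75 / dl * (K / eps ^+ 2)) = 75 * K.
    field; apply/andP; split; rewrite ?expf_neq0 // ?gt_eqF //; lra.
  by [].
have t0 : 0 < (eps / 5 * n * mu) ^+ 2.
  by rewrite exprn_gt0 // !mulr_gt0 // ?invr_gt0; lra.
rewrite ler_pdivrMr //.
apply: (@le_trans _ _ (n * (K * mu ^+ 2))); first exact: (ler_wpM2l (ltW n0) hE).
have nm : 0 <= n * mu ^+ 2 by apply: mulr_ge0; [exact: ltW | exact: sqr_ge0].
have := ler_wpM2r nm h75.
move=> h.
have -> : dl / 3 * (eps / 5 * n * mu) ^+ 2 = (dl * eps ^+ 2 * n) * (n * mu ^+ 2) / 75.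
  by field.
have -> : n * (K * mu ^+ 2) = 75 * K * (n * mu ^+ 2) / 75 by field.
by rewrite ler_pM2r // invr_gt0; lra.
Qed.

Lemma combine (R : realType) (I J : finType) (P1 b1 : I -> R) (P2 b2 b3 : J -> R)
  (F : I -> J -> R) :
  \sum_i P1 i = 1 -> \sum_j P2 j = 1 -> (forall i, 0 <= P1 i) -> (forall j, 0 <= P2 j) ->
  (forall i j, 1 - b1 i - b2 j - b3 j <= F i j) ->
  1 - \sum_i P1 i * b1 i - \sum_j P2 j * b2 j - \sum_j P2 j * b3 j
   <= \sum_i \sum_j P1 i * P2 j * F i j.
Proof.
move=> s1 s2 p1 p2 hF.
apply: (@le_trans _ _ (\sum_i \sum_j P1 i * P2 j * (1 - b1 i - b2 j - b3 j))); last first.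
  apply: ler_sum => i _; apply: ler_sum => j _; apply: ler_wpM2l => //.
  exact: mulr_ge0.
have -> : \sum_i \sum_j P1 i * P2 j * (1 - b1 i - b2 j - b3 j) =
  \sum_i (P1 i * (\sum_j P2 j) - P1 i * b1 i * (\sum_j P2 j)
          - P1 i * (\sum_j P2 j * b2 j) - P1 i * (\sum_j P2 j * b3 j)).
  apply: eq_bigr => i _.
  rewrite !mulr_sumr -!sumrB; apply: eq_bigr => j _; ring.
rewrite s2 !sumrB -!mulr_suml s1; lra.
Qed.

Lemma sum_le_max (V : finType) (f : V -> nat) (A : {set V}) :
  (\sum_(v in A) f v <= #|A| * max_nat f A)%N.
Proof.
rewrite /max_nat -sum_nat_const; apply: leq_sum => v vA; exact: leq_bigmax_cond.
Qed.

Lemma rel_dev (R : realType) (X n mu a : R) : 0 < n -> 0 < mu ->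
  ~~ (a * n * mu < `|X - n * mu|) -> `|X / (n * mu) - 1| <= a.
Proof.
move=> n0 m0; rewrite -leNgt => h.
have nm : 0 < n * mu by exact: mulr_gt0.
have -> : X / (n * mu) - 1 = (X - n * mu) / (n * mu).
  by field; rewrite !gt_eqF.
by rewrite normrM normfV (gtr0_norm nm) ler_pdivrMr // mulrA.
Qed.

Theorem theoremA2 (R : realType) (delta : R) :
  0 < delta < 1 ->
  exists C : R, 0 < C /\
  forall (V : finType) (e : rel V), symmetric e -> irreflexive e ->
  forall (L0 : {set V}) (rs : V -> R) (eps : R),
  0 < eps < 1 ->
  (forall v, v \in Lge2 e L0 -> 0 < rs v) ->
  Lge2 e L0 != set0 ->
  0 < avg_nat R (dplus e L0) (L1 e L0) ->
  0 < avg_nat R (dminus e L0) (Lge2 e L0) ->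
  forall s1 s2 : nat,
  C * ((max_nat (dplus e L0) (L1 e L0))%:R
         / (eps ^+ 2 * avg_nat R (dplus e L0) (L1 e L0))) <= s1%:R ->
  C * (c_rs rs (Lge2 e L0) * (max_nat (dminus e L0) (Lge2 e L0))%:R
         / (eps ^+ 2 * avg_nat R (dminus e L0) (Lge2 e L0))) <= s2%:R ->
  1 - delta <= success_prob e L0 rs eps s1 s2.
Proof.
move=> /andP[dl0 dl1].
exists (75 / delta); split; first by rewrite divr_gt0.
move=> V e _ _ L0 rs eps /andP[e0 e1] rspos Lne avg1 avg2 s1 s2 hs1 hs2.
pose m1 := #|L1 e L0|. pose m := #|Lge2 e L0|.
pose Sd : R := (\sum_(v in L1 e L0) dplus e L0 v)%:R.
pose Sdm : R := (\sum_(v in Lge2 e L0) dminus e L0 v)%:R.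
pose Srs := \sum_(v in Lge2 e L0) rs v.
pose D1 := max_nat (dplus e L0) (L1 e L0).
pose Dm := max_nat (dminus e L0) (Lge2 e L0).
pose rmin := rs_min rs (Lge2 e L0).
have SdE : Sd = Sdm by rewrite /Sd /Sdm double_count.
have avg1E : avg_nat R (dplus e L0) (L1 e L0) = Sd / m1%:R by [].
have avg2E : avg_nat R (dminus e L0) (Lge2 e L0) = Sdm / m%:R by [].
have m1pos : (0 < m1)%N.
  move: avg1; rewrite avg1E /m1; case: posnP => [->|//].
  by rewrite invr0 mulr0 ltxx.
have m1R : 0 < m1%:R :> R by rewrite ltr0n.
have Sdpos : 0 < Sd by move: avg1; rewrite avg1E pmulr_lgt0 // invr_gt0.
have mpos : (0 < m)%N by rewrite /m card_gt0.
have mR : 0 < m%:R :> R by rewrite ltr0n.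
have Sdmpos : 0 < Sdm by rewrite -SdE.
have [w0 w0L] : exists w, w \in Lge2 e L0 by apply/set0Pn.
have Srspos : 0 < Srs.
  rewrite /Srs (bigD1 w0) //=.
  apply: (lt_le_trans (rspos _ w0L)); rewrite lerDl.
  by apply: sumr_ge0 => v /andP[vL _]; exact: ltW (rspos _ vL).
have rminpos : 0 < rmin.
  rewrite /rmin /rs_min; apply: lt_bigmin; first by rewrite /rs_avg divr_gt0.
  exact: rspos.
have rminle : forall v, v \in Lge2 e L0 -> rmin <= rs v.
  by move=> v vL; rewrite /rmin /rs_min; apply: bigmin_le_cond.
have D1pos : (0 < D1)%N.
  have h := sum_le_max _ (dplus e L0) (L1 e L0).
  move: Sdpos; rewrite /Sd ltr0n => Sp; move: h; rewrite -/D1.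
  by case: posnP => // ->; rewrite muln0 leqn0 => /eqP h0; rewrite h0 in Sp.
have Dmpos : (0 < Dm)%N.
  have h := sum_le_max _ (dminus e L0) (Lge2 e L0).
  move: Sdmpos; rewrite /Sdm ltr0n => Sp; move: h; rewrite -/Dm.
  by case: posnP => // ->; rewrite muln0 leqn0 => /eqP h0; rewrite h0 in Sp.
have SdmDm : Sdm <= m%:R * Dm%:R.
  by rewrite /Sdm -natrM ler_nat; exact: sum_le_max.
have D1le : forall v, v \in L1 e L0 -> (dplus e L0 v <= D1)%N.
  by move=> v vA; exact: leq_bigmax_cond.
have Dmle : forall v, v \in Lge2 e L0 -> (dminus e L0 v <= Dm)%N.
  by move=> v vA; exact: leq_bigmax_cond.
pose pu := p_unif R e L0. pose pr := p_reach e L0 rs.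
have pu1 : \sum_v pu v = 1.
  rewrite /pu /p_unif -big_mkcond /= sumr_const -/m1 mul1r -mulr_natr.
  rewrite -mulr_natr; field.
  by rewrite gt_eqF.
have pu0 : forall v, 0 <= pu v.
  by move=> v; rewrite /pu /p_unif; case: ifP => _ //; rewrite divr_ge0 // ltW.
have pr1 : \sum_v pr v = 1.
  rewrite /pr /p_reach -big_mkcond /= -mulr_suml -/Srs divff //.
  by rewrite gt_eqF.
have pr0 : forall v, 0 <= pr v.
  move=> v; rewrite /pr /p_reach; case: ifP => vL //.
  by rewrite divr_ge0 // ltW // rspos.
pose d1 v : R := (dplus e L0 v)%:R.
pose fN v : R := (dminus e L0 v)%:R / rs v.
pose fD v : R := 1 / rs v.
have mu1 : mu R V pu d1 = Sd / m1%:R.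
  rewrite /mu /pu /p_unif (sum_if _ _ _ (fun _ => 1 / m1%:R) d1).
  by rewrite -mulr_sumr /Sd natr_sum mul1r mulrC.
have mu2 : mu R V pr fN = Sdm / Srs.
  rewrite /mu /pr /p_reach (sum_if _ _ _ (fun v => rs v / Srs) fN).
  rewrite (eq_bigr (fun v => (dminus e L0 v)%:R / Srs)).
    by rewrite -mulr_suml /Sdm natr_sum.
  move=> v vL; rewrite /fN; field.
  by rewrite !gt_eqF // rspos.
have mu3 : mu R V pr fD = m%:R / Srs.
  rewrite /mu /pr /p_reach (sum_if _ _ _ (fun v => rs v / Srs) fD).
  rewrite (eq_bigr (fun v => 1 / Srs)).
    by rewrite sumr_const -/m -mulr_natr; field; rewrite gt_eqF.
  move=> v vL; rewrite /fD; field.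
  by rewrite !gt_eqF // rspos.
have E1 : \sum_v pu v * d1 v ^+ 2 <=
    (D1%:R / avg_nat R (dplus e L0) (L1 e L0)) * mu R V pu d1 ^+ 2.
  rewrite mu1 avg1E /pu /p_unif
    (sum_if _ _ _ (fun _ => 1 / m1%:R) (fun v => d1 v ^+ 2)).
  apply: (@le_trans _ _ (\sum_(v in L1 e L0) 1 / m1%:R * (D1%:R * d1 v))).
    apply: ler_sum => v vA; apply: ler_wpM2l; first by rewrite divr_ge0 // ltW.
    by rewrite expr2; apply: ler_wpM2r; rewrite ?ler0n // ler_nat D1le.
  rewrite -mulr_sumr -mulr_sumr -natr_sum -/Sd.
  rewrite [X in _ <= X](_ : _ = 1 / m1%:R * (D1%:R * Sd)) //.
  by field; rewrite !gt_eqF.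
have crsE : c_rs rs (Lge2 e L0) = Srs / m%:R / rmin by [].
have E2 : \sum_v pr v * fN v ^+ 2 <=
    (c_rs rs (Lge2 e L0) * Dm%:R / avg_nat R (dminus e L0) (Lge2 e L0))
      * mu R V pr fN ^+ 2.
  rewrite mu2 avg2E crsE /pr /p_reach
    (sum_if _ _ _ (fun v => rs v / Srs) (fun v => fN v ^+ 2)).
  apply: (@le_trans _ _ (\sum_(v in Lge2 e L0)
            (Dm%:R / (rmin * Srs)) * (dminus e L0 v)%:R)).
    apply: ler_sum => v vL.
    have rv := rspos v vL; have rl := rminle v vL.
    have dle : (dminus e L0 v)%:R <= Dm%:R :> R by rewrite ler_nat Dmle.
    have d0 : 0 <= (dminus e L0 v)%:R :> R by rewrite ler0n.
    have h : (dminus e L0 v)%:R * ((dminus e L0 v)%:R / rs v) <=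
             Dm%:R * ((dminus e L0 v)%:R / rmin).
      apply: ler_pM => //; first by rewrite divr_ge0 // ltW.
      by apply: ler_wpM2l => //; rewrite lef_pV2 ?posrE.
    have e1' : rs v / Srs * fN v ^+ 2 =
        (dminus e L0 v)%:R * ((dminus e L0 v)%:R / rs v) / Srs.
      by rewrite /fN; field; rewrite !gt_eqF.
    have e2' : Dm%:R / (rmin * Srs) * (dminus e L0 v)%:R =
        Dm%:R * ((dminus e L0 v)%:R / rmin) / Srs.
      by field; rewrite !gt_eqF.
    by rewrite e1' e2' ler_pM2r // invr_gt0.
  rewrite -mulr_sumr -natr_sum -/Sdm.
  rewrite [X in _ <= X](_ : _ = Dm%:R / (rmin * Srs) * Sdm) //.
  by field; rewrite !gt_eqF.
have E3 : \sum_v pr v * fD v ^+ 2 <=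
    (c_rs rs (Lge2 e L0) * Dm%:R / avg_nat R (dminus e L0) (Lge2 e L0))
      * mu R V pr fD ^+ 2.
  rewrite mu3 avg2E crsE /pr /p_reach
    (sum_if _ _ _ (fun v => rs v / Srs) (fun v => fD v ^+ 2)).
  apply: (@le_trans _ _ (\sum_(v in Lge2 e L0) 1 / (rmin * Srs))).
    apply: ler_sum => v vL.
    have rv := rspos v vL; have rl := rminle v vL.
    have e1' : rs v / Srs * fD v ^+ 2 = (rs v)^-1 / Srs.
      by rewrite /fD; field; rewrite !gt_eqF.
    have e2' : 1 / (rmin * Srs) = rmin^-1 / Srs.
      by field; rewrite !gt_eqF.
    by rewrite e1' e2' ler_pM2r ?invr_gt0 // lef_pV2 ?posrE.
  rewrite sumr_const -/m.
  rewrite [X in X <= _](_ : _ = m%:R / (rmin * Srs)); last first.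
    by rewrite -mulr_natr; field; rewrite !gt_eqF.
  rewrite [X in _ <= X](_ : _ = m%:R / (rmin * Srs) * (Dm%:R * m%:R / Sdm)); last first.
    by field; rewrite !gt_eqF.
  apply: ler_peMr; first by rewrite divr_ge0 // ?ler0n // ltW // mulr_gt0.
  by rewrite ler_pdivlMr // mul1r mulrC.
have s1R : 0 < s1%:R :> R.
  apply: (lt_le_trans _ hs1); apply: mulr_gt0; first by rewrite divr_gt0.
  apply: divr_gt0; first by rewrite ltr0n.
  by apply: mulr_gt0; rewrite ?exprn_gt0.
have crspos : 0 < c_rs rs (Lge2 e L0) by rewrite crsE !divr_gt0.
have s2R : 0 < s2%:R :> R.
  apply: (lt_le_trans _ hs2); apply: mulr_gt0; first by rewrite divr_gt0.
  apply: divr_gt0; first by rewrite mulr_gt0 // ltr0n.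
  by apply: mulr_gt0; rewrite ?exprn_gt0.
have mu1pos : 0 < mu R V pu d1 by rewrite mu1 divr_gt0.
have mu2pos : 0 < mu R V pr fN by rewrite mu2 divr_gt0.
have mu3pos : 0 < mu R V pr fD by rewrite mu3 divr_gt0.
have a0 : 0 < eps / 5 by rewrite divr_gt0.
have t1pos : 0 < eps / 5 * s1%:R * mu R V pu d1.
  by apply: mulr_gt0 => //; apply: mulr_gt0.
have t2pos : 0 < eps / 5 * s2%:R * mu R V pr fN.
  by apply: mulr_gt0 => //; apply: mulr_gt0.
have t3pos : 0 < eps / 5 * s2%:R * mu R V pr fD.
  by apply: mulr_gt0 => //; apply: mulr_gt0.
pose b1 := fun S1 : {ffun 'I_s1 -> V} =>
  (if eps / 5 * s1%:R * mu R V pu d1 < `|\sum_i d1 (S1 i) - s1%:R * mu R V pu d1|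
   then 1 else 0) : R.
pose b2 := fun S2 : {ffun 'I_s2 -> V} =>
  (if eps / 5 * s2%:R * mu R V pr fN < `|\sum_i fN (S2 i) - s2%:R * mu R V pr fN|
   then 1 else 0) : R.
pose b3 := fun S2 : {ffun 'I_s2 -> V} =>
  (if eps / 5 * s2%:R * mu R V pr fD < `|\sum_i fD (S2 i) - s2%:R * mu R V pr fD|
   then 1 else 0) : R.
have B1 : \sum_(S1 : {ffun 'I_s1 -> V}) (\prod_k pu (S1 k)) * b1 S1 <= delta / 3.
  apply: (le_trans (cheb _ _ _ pu1 pu0 s1 d1 _ t1pos)).
  apply: (bound_gen _ _ _ _ _ _ _ _ dl0 e0 mu1pos s1R _ E1 hs1).
  by rewrite divr_ge0 // ?ler0n // ltW.
have B2 : \sum_(S2 : {ffun 'I_s2 -> V}) (\prod_k pr (S2 k)) * b2 S2 <= delta / 3.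
  apply: (le_trans (cheb _ _ _ pr1 pr0 s2 fN _ t2pos)).
  apply: (bound_gen _ _ _ _ _ _ _ _ dl0 e0 mu2pos s2R _ E2 hs2).
  by apply: divr_ge0; [apply: mulr_ge0; rewrite ?ler0n // ltW | exact: ltW].
have B3 : \sum_(S2 : {ffun 'I_s2 -> V}) (\prod_k pr (S2 k)) * b3 S2 <= delta / 3.
  apply: (le_trans (cheb _ _ _ pr1 pr0 s2 fD _ t3pos)).
  apply: (bound_gen _ _ _ _ _ _ _ _ dl0 e0 mu3pos s2R _ E3 hs2).
  by apply: divr_ge0; [apply: mulr_ge0; rewrite ?ler0n // ltW | exact: ltW].
have CB := combine R _ _ (fun S1 : {ffun 'I_s1 -> V} => \prod_k pu (S1 k)) b1
  (fun S2 : {ffun 'I_s2 -> V} => \prod_k pr (S2 k)) b2 b3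
  (fun S1 S2 => if ((1 - eps) * #|Lge2 e L0|%:R <= estimate e L0 rs S1 S2)
         && (estimate e L0 rs S1 S2 <= (1 + eps) * #|Lge2 e L0|%:R)
      then 1 else 0)
  (mass _ _ _ pu1 s1) (mass _ _ _ pr1 s2) (P_ge0 _ _ _ pu0 s1) (P_ge0 _ _ _ pr0 s2).
apply: le_trans (CB _); first by lra.
move=> S1 S2; rewrite /b1 /b2 /b3 /=.
case: ifPn => h1; first by case: ifP => _; case: ifP => _; case: ifP => _; lra.
case: ifPn => h2; first by case: ifP => _; case: ifP => _; lra.
case: ifPn => h3; first by case: ifP => _; lra.
have hx := rel_dev R _ _ _ _ s1R mu1pos h1.
have hy := rel_dev R _ _ _ _ s2R mu2pos h2.
have hz := rel_dev R _ _ _ _ s2R mu3pos h3.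
have a5 : 5 * (eps / 5) < 1 by rewrite mulrC divfK //; lra.
have := key_ratio R _ _ _ _ m%:R a0 a5 (ler0n _ _) hx hy hz.
have e5 : 5 * (eps / 5) = eps by rewrite mulrC divfK //; lra.
rewrite e5.
set x := (\sum_i d1 (S1 i)) / _ in hx *.
set y := (\sum_i fN (S2 i)) / _ in hy *.
set z := (\sum_i fD (S2 i)) / _ in hz *.
have ypos : 0 < y by move: hy; rewrite ler_norml; lra.
have zpos : 0 < z by move: hz; rewrite ler_norml; lra.
have Npos : 0 < \sum_i fN (S2 i).
  by move: ypos; rewrite /y pmulr_lgt0 // invr_gt0 mulr_gt0.
have Dpos : 0 < \sum_i fD (S2 i).
  by move: zpos; rewrite /z pmulr_lgt0 // invr_gt0 mulr_gt0.
have est_eq : estimate e L0 rs S1 S2 = m%:R * (x * z / y).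
  rewrite /x /y /z mu1 mu2 mu3 -SdE.
  move: Npos Dpos; rewrite /d1 /fN /fD /estimate /= => Npos Dpos.
  by field; rewrite !gt_eqF.
rewrite est_eq => /andP[l u].
by rewrite l u /=; lra.
Qed.
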